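(* Let $S$ be an inductive $E$-demigroup with associated function $\cdot:S\times E\to E$. Then $C^d_E(S)$ is an inductive constellation, and for all $(f,s)\in C^d_E(S)$ and $e\in E$ the co-restriction is $$(f,s)|(e,e)=\big(f\wedge(s\cdot e),\,(f\wedge(s\cdot e))s\big),$$ where $\wedge$ is the meet in $(E,\le_r)$.
   Context: For a semigroup $S$, $E(S)$ is its set of idempotents; for $e,f\in E(S)$, $e\le_r f$ iff $e=ef$. $E\subseteq E(S)$ is right pre-reduced if $e=ef$ and $f=fe$ imply $e=f$ for $e,f\in E$. A demigroup is a semigroup $S$ with unary $d$ such that $d(x)\in E(S)$, $d(x)x=x$, $d(xy)=d(xd(y))$ for all $x,y$. For $E\subseteq E(S)$, $S$ is an $E$-demigroup if $d(s)\in E$ for all $s$ and $ed(e)=e$ for all $e\in E$. It is inductive if $E$ is right pre-reduced, $(E,\le_r)$ is a meet-semilattice with meet $\wedge$, and there is a function $\cdot:S\times E\to E$ with (I1) for all $t\in S$, $e\in E$, $s\in S$: ($ste=st$ and $sd(t)=s$) iff $s(t\cdot e)=s$; (I2) for $s\in S$, $e,f\in E$: $se=sf=s$ implies $s(e\wedge f)=s$. $C_E(S)=\{(e,s)\in E\times S\mid es=s\}$ with partial product $(e,s)\circ(f,t)=(e,st)$ defined exactly when $sf=s$, and $D((e,s))=(e,e)$; $C^d_E(S)=\{(e,s)\in C_E(S)\mid d(e)=d(s)\}$ with restricted operations. A constellation is a set $P$ with partial binary $\circ$ and unary $D$ such that (C1) if $x\circ(y\circ z)$ exists then so does $(x\circ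 y)\circ z$ and they are equal; (C2) if $x\circ y$ and $y\circ z$ exist then $x\circ(y\circ z)$ exists; (C3) $D(x)$ is the unique right identity $e$ (i.e. $a\circ e=a$ whenever defined) with $e\circ x=x$. Natural quasiorder: $s\le t$ iff $D(s)\circ t$ exists and equals $s$; normal if this is a partial order. $P$ is inductive if it is normal and (O4) for all $e\in D(P)=\{D(x)\mid x\in P\}$ and $a\in P$ there is a largest $x$ (natural order) with $x\le a$ and $x\circ e$ defined, denoted $a|e$ (the co-restriction of $a$ to $e$); (O5) for $x,y\in P$, $e\in D(P)$, if $x\circ y$ exists then $D((x\circ y)|e)=D(x|D(y|e))$. *)

(* Defs.v *)
Set Implicit Arguments.

Section DefsSemigroup.
Variable S : Type.
Variable mul : S -> S -> S.

Definition semigroup : Prop :=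
  forall x y z : S, mul x (mul y z) = mul (mul x y) z.

Definition idempotent (e : S) : Prop := mul e e = e.

Definition le_r (e f : S) : Prop := e = mul e f.

Definition right_pre_reduced (E : S -> Prop) : Prop :=
  forall e f, E e -> E f -> e = mul e f -> f = mul f e -> e = f.

Definition demigroup (d : S -> S) : Prop :=
  semigroup /\
  (forall x, idempotent (d x)) /\
  (forall x, mul (d x) x = x) /\
  (forall x y, d (mul x y) = d (mul x (d y))).

Definition E_demigroup (d : S -> S) (E : S -> Prop) : Prop :=
  demigroup d /\
  (forall e, E e -> idempotent e) /\
  (forall s, E (d s)) /\
  (forall e, E e -> mul e (d e) = e).

Definition is_meet (E : S -> Prop) (meet : S -> S -> S) : Prop :=
  forall e f, E e -> E f ->
    E (meet e f) /\ le_r (meet e f) e /\ le_r (meet e f) f /\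
    (forall g, E g -> le_r g e -> le_r g f -> le_r g (meet e f)).

(* Inductive E-demigroup with meet [meet] and associated function
   [dot : S x E -> E] (given as a total function, only used on E in
   its second argument). *)
Definition inductive_E_demigroup (d : S -> S) (E : S -> Prop)
    (meet : S -> S -> S) (dot : S -> S -> S) : Prop :=
  E_demigroup d E /\
  right_pre_reduced E /\
  is_meet E meet /\
  (forall t e, E e -> E (dot t e)) /\
  (* (I1) *)
  (forall t e s, E e ->
     ((mul (mul s t) e = mul s t /\ mul s (d t) = s) <-> mul s (dot t e) = s)) /\
  (* (I2) *)
  (forall s e f, E e -> E f -> mul s e = s -> mul s f = s -> mul s (meet e f) = s).

(* C^d_E(S): carrier S*S restricted by the predicate below *)
Definition CdE_P (d : S -> S) (E : S -> Prop) (p : S * S) : Prop :=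
  E (fst p) /\ mul (fst p) (snd p) = snd p /\ d (fst p) = d (snd p).

Definition CdE_def (p q : S * S) : Prop := mul (snd p) (fst q) = snd p.

Definition CdE_op (p q : S * S) : S * S := (fst p, mul (snd p) (snd q)).

Definition CdE_D (p : S * S) : S * S := (fst p, fst p).

End DefsSemigroup.

Section DefsConstellation.
(* A constellation structure on the subset P of T: partial product given by
   the domain-of-definition predicate [def] and the value [op] (only
   meaningful where [def] holds), and unary [D]. *)
Variable T : Type.
Variable P : T -> Prop.
Variable def : T -> T -> Prop.
Variable op : T -> T -> T.
Variable D : T -> T.

Definition right_identity (e : T) : Prop :=
  forall a, P a -> def a e -> op a e = a.

Definition constellation : Prop :=
  (forall x y, P x -> P y -> def x y -> P (op x y)) /\
  (forall x, P x -> P (D x)) /\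
  (* (C1) *)
  (forall x y z, P x -> P y -> P z -> def y z -> def x (op y z) ->
     def x y /\ def (op x y) z /\ op (op x y) z = op x (op y z)) /\
  (* (C2) *)
  (forall x y z, P x -> P y -> P z -> def x y -> def y z -> def x (op y z)) /\
  (* (C3) *)
  (forall x, P x ->
     right_identity (D x) /\ def (D x) x /\ op (D x) x = x /\
     (forall e, P e -> right_identity e -> def e x -> op e x = x -> e = D x)).

Definition nat_le (s t : T) : Prop := def (D s) t /\ op (D s) t = s.

Definition normal : Prop :=
  (forall x, P x -> nat_le x x) /\
  (forall x y z, P x -> P y -> P z -> nat_le x y -> nat_le y z -> nat_le x z) /\
  (forall x y, P x -> P y -> nat_le x y -> nat_le y x -> x = y).

Definition in_DP (e : T) : Prop := exists x, P x /\ e = D x.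

Definition is_corestriction (a e x : T) : Prop :=
  P x /\ nat_le x a /\ def x e /\
  (forall y, P y -> nat_le y a -> def y e -> nat_le y x).

Definition inductive_constellation : Prop :=
  constellation /\ normal /\
  (* (O4) *)
  (forall e a, in_DP e -> P a -> exists x, is_corestriction a e x) /\
  (* (O5) *)
  (forall x y e c1 c2 c3, P x -> P y -> in_DP e -> def x y ->
     is_corestriction (op x y) e c1 ->
     is_corestriction y e c2 ->
     is_corestriction x (D c2) c3 ->
     D c1 = D c3).

End DefsConstellation.

(* Main.v *)
Require Import Defs.
From Stdlib Require Import Setoid.

Theorem proposition3p7 (S : Type) (mul : S -> S -> S) (d : S -> S)
    (E : S -> Prop) (meet : S -> S -> S) (dot : S -> S -> S) :
  inductive_E_demigroup mul d E meet dot ->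
  inductive_constellation (CdE_P mul d E) (CdE_def mul) (CdE_op mul) (@CdE_D S) /\
  (forall f s e, CdE_P mul d E (f, s) -> E e ->
     is_corestriction (CdE_P mul d E) (CdE_def mul) (CdE_op mul) (@CdE_D S)
       (f, s) (e, e)
       (meet f (dot s e), mul (meet f (dot s e)) s)).
Proof.
  intros [[[assoc [Hid [Hdm Hdd]]] [HEid [HEd HEed]]] [Hrpr [Hmeet [Hdot [HI1 HI2]]]]].
  unfold semigroup in assoc. unfold idempotent in Hid, HEid.
  assert (Hcore : forall f s e, E f -> mul f s = s -> d f = d s -> E e ->
     is_corestriction (CdE_P mul d E) (CdE_def mul) (CdE_op mul) (@CdE_D S)
       (f, s) (e, e)
       (meet f (dot s e), mul (meet f (dot s e)) s)).
  { intros f s e Ef fs dfs Ee.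
    assert (Ede : E (dot s e)) by (apply Hdot; exact Ee).
    destruct (Hmeet f (dot s e) Ef Ede) as [Em [mf [mde _]]].
    set (m := meet f (dot s e)) in *.
    unfold le_r in mf, mde.
    assert (mm : mul m m = m) by (apply HEid; exact Em).
    destruct (HI1 s e m Ee) as [_ I1b].
    destruct (I1b (eq_sym mde)) as [mse mds].
    unfold is_corestriction, nat_le, CdE_P, CdE_def, CdE_op, CdE_D; cbn.
    split; [|split; [|split]].
    - split; [exact Em|split].
      + rewrite assoc, mm; reflexivity.
      + rewrite Hdd, <- dfs, <- Hdd, <- mf. reflexivity.
    - split; [symmetry; exact mf|reflexivity].
    - exact mse.
    - intros [g u]; cbn. intros [Eg [gu dgu]] [gf gs] gue.
      injection gs as gs.
      assert (gds : mul g (d s) = g).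
      { rewrite <- dfs, <- gf at 1. rewrite <- assoc, HEed by exact Ef. exact gf. }
      assert (gde : mul g (dot s e) = g).
      { apply (HI1 s e g Ee). split; [rewrite gs; exact gue| exact gds]. }
      assert (gm : mul g m = g) by (apply HI2; assumption).
      split; [exact gm|]. rewrite assoc, gm, gs. reflexivity. }
  split; [|intros f s e [Ef [fs dfs]] Ee; exact (Hcore f s e Ef fs dfs Ee)].
  assert (Hnorm : normal (CdE_P mul d E) (CdE_def mul) (CdE_op mul) (@CdE_D S)).
  { unfold normal, nat_le, CdE_P, CdE_def, CdE_op, CdE_D; cbn.
    split; [|split].
    - intros [e s]; cbn. intros [Ee [es des]]. split; [apply HEid; exact Ee|rewrite es; reflexivity].
    - intros [e s] [f t] [g u]; cbn. intros _ _ _ [ef et] [fg fu].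
      injection et as et; injection fu as fu.
      split.
      + rewrite <- ef, <- assoc, fg. reflexivity.
      + f_equal. rewrite <- et, <- fu, assoc, ef. reflexivity.
    - intros [e s] [f t]; cbn. intros [Ee _] [Ef _] [ef et] [fe fs].
      injection et as et; injection fs as fs.
      assert (e = f) by (apply Hrpr; auto).
      subst f. rewrite <- fs, <- et, assoc, (HEid e Ee), et. reflexivity. }
  assert (Hclos : forall x y, CdE_P mul d E x -> CdE_P mul d E y -> CdE_def mul x y ->
                   CdE_P mul d E (CdE_op mul x y)).
  { intros [e s] [f t]; unfold CdE_P, CdE_def, CdE_op; cbn.
    intros [Ee [es des]] [Ef [ft dft]] sf.
    split; [exact Ee|split].
    - rewrite assoc, es; reflexivity.
    - rewrite Hdd, <- dft, <- Hdd, sf. exact des. }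
  split; [|split; [exact Hnorm|split]].
  -
    unfold constellation. split; [exact Hclos|split; [|split; [|split]]].
    + intros [e s]; unfold CdE_P, CdE_D; cbn. intros [Ee _].
      split; [exact Ee|split; [apply HEid; exact Ee|reflexivity]].
    + intros [e s] [f t] [g u]; unfold CdE_P, CdE_def, CdE_op; cbn.
      intros _ _ _ tg sf. split; [exact sf|split].
      * rewrite <- assoc, tg. reflexivity.
      * rewrite assoc. reflexivity.
    + intros [e s] [f t] [g u]; unfold CdE_def, CdE_op; cbn. auto.
    + intros [e s]; unfold CdE_P, CdE_def, CdE_op, CdE_D, right_identity; cbn.
      intros [Ee [es des]].
      split; [|split; [|split]].
      * intros [g u]; cbn. intros _ ue. rewrite ue. reflexivity.
      * apply HEid; exact Ee.
      * rewrite es; reflexivity.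
      * intros [g v]; cbn. intros [Eg [gv dgv]] Hri ve Hop.
        injection Hop as ge _. subst g.
        assert (H1 : (e, mul e v) = (e, e)).
        { apply (Hri (e, e)); cbn; [split; [exact Ee|split; [apply HEid; exact Ee|reflexivity]]|apply HEid; exact Ee]. }
        injection H1 as H1. rewrite <- gv, H1. reflexivity.
  -
    intros ee [f s] [[h k] [[Eh _] ->]] [Ef [fs dfs]]. cbn in *.
    unfold CdE_D; cbn.
    eexists. exact (Hcore f s h Ef fs dfs Eh).
  -
    intros [e s] [f t] ee [m1 u1] [m2 u2] [m3 u3] [Ee [es des]] [Ef [ft dft]]
      [[h k] [[Eh _] ->]] sf C1 C2 C3.
    unfold CdE_D in *; cbn in *.
    destruct C1 as [[Em1 [mu1 dmu1]] [[me1 le1] [def1 max1]]].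
    destruct C2 as [[Em2 [mu2 dmu2]] [[me2 le2] [def2 max2]]].
    destruct C3 as [[Em3 [mu3 dmu3]] [[me3 le3] [def3 max3]]].
    unfold CdE_def, CdE_op, CdE_D in *; cbn in *.
    injection le1 as le1. injection le2 as le2. injection le3 as le3.
    assert (A : mul m3 m1 = m3).
    { assert (P1 : CdE_P mul d E (m3, mul u3 u2)).
      { unfold CdE_P; cbn. split; [exact Em3|split].
        + rewrite assoc, mu3. reflexivity.
        + rewrite Hdd, <- dmu2, <- Hdd, def3. exact dmu3. }
      assert (P2 : mul m3 e = m3 /\ (m3, mul m3 (mul s t)) = (m3, mul u3 u2)).
      { split; [exact me3|]. f_equal. rewrite <- le2, !assoc, def3, le3. reflexivity. }
      assert (P3 : mul (mul u3 u2) h = mul u3 u2).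
      { rewrite <- assoc, def2. reflexivity. }
      destruct (max1 (m3, mul u3 u2) P1 P2 P3) as [HA _]. exact HA. }
    destruct (Hcore f t h Ef ft dft Eh) as [Pc [lec [defc _]]].
    set (m := meet f (dot t h)) in *.
    assert (mm2 : mul m m2 = m).
    { destruct (max2 (m, mul m t) Pc lec defc) as [HH _]. exact HH. }
    assert (m1sdt : mul (mul m1 s) (d t) = mul m1 s).
    { rewrite <- dft, <- sf at 1. rewrite <- !assoc, HEed by exact Ef.
      rewrite sf. reflexivity. }
    assert (Ede : E (dot t h)) by (apply Hdot; exact Eh).
    assert (B0 : mul (mul m1 s) m = mul m1 s).
    { apply HI2; [exact Ef|exact Ede| |].
      - rewrite <- assoc, sf. reflexivity.
      - apply (HI1 t h (mul m1 s) Eh). split; [|exact m1sdt].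
        rewrite <- (assoc m1 s t), le1. exact def1. }
    assert (B : mul (mul m1 s) m2 = mul m1 s).
    { rewrite <- B0 at 1. rewrite <- assoc, mm2. exact B0. }
    assert (C : mul m1 m3 = m1).
    { assert (P1 : CdE_P mul d E (m1, mul m1 s)).
      { unfold CdE_P; cbn. split; [exact Em1|split].
        + rewrite assoc, HEid by exact Em1. reflexivity.
        + rewrite dmu1, <- le1, assoc, Hdd, m1sdt. reflexivity. }
      assert (P2 : mul m1 e = m1 /\ (m1, mul m1 s) = (m1, mul m1 s)) by (split; [exact me1|reflexivity]).
      destruct (max3 (m1, mul m1 s) P1 P2 B) as [HC _]. exact HC. }
    assert (m1 = m3) by (apply Hrpr; auto).
    subst m3. reflexivity.
Qed.
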